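(* Let $(R,\mathfrak m)$ be a Noetherian local ring, $M$ a finitely generated $R$-module, and $N \subseteq H^0_{\mathfrak m}(M)$ a submodule (necessarily of finite length). Then $\mathfrak b(M) \subseteq \mathfrak b(M/N)$.
   Context: For a finitely generated $R$-module $L$ of dimension $d$, define $$\mathfrak b(L) = \bigcap_{\underline{x}}\ \bigcap_{i=1}^{d} \mathrm{Ann}_R\Big( \big((x_1,\dots,x_{i-1})L :_L x_i\big)/(x_1,\dots,x_{i-1})L \Big),$$ where $\underline{x}=x_1,\dots,x_d$ runs over all systems of parameters of $L$. $H^i_{\mathfrak m}(-)$ denotes local cohomology with support in $\mathfrak m$. *)

(* Defs.v *)
From HB Require Import structures.
From mathcomp Require Import all_boot all_order all_algebra.
Set Implicit Arguments. Unset Strict Implicit. Unset Printing Implicit Defensive.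
Import GRing.Theory.
Local Open Scope ring_scope.

Section CommAlg.
Variable R : comNzRingType.

Definition is_ideal (I : R -> Prop) : Prop :=
  I 0 /\ (forall x y, I x -> I y -> I (x + y)) /\ (forall r x, I x -> I (r * x)).

Definition prime_ideal (P : R -> Prop) : Prop :=
  is_ideal P /\ ~ P 1 /\ (forall x y, P (x * y) -> P x \/ P y).

Definition noetherian_ring : Prop :=
  forall I : R -> Prop, is_ideal I ->
    exists s : seq R, forall x, I x <->
      exists c : 'I_(size s) -> R, x = \sum_(i < size s) c i * s`_i.

(* (R, m) is local with maximal ideal m : m is a proper ideal and every
   element outside m is a unit (so m is the unique maximal ideal). *)
Definition local_with_max (m : R -> Prop) : Prop :=
  is_ideal m /\ ~ m 1 /\ (forall x, ~ m x -> exists y, x * y = 1).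

Definition pstrict_sub {T} (A B : T -> Prop) : Prop :=
  (forall x, A x -> B x) /\ exists x, B x /\ ~ A x.

Variable L : lmodType R.

Definition is_submod (P : L -> Prop) : Prop :=
  P 0 /\ (forall u v, P u -> P v -> P (u + v)) /\ (forall r v, P v -> P (r *: v)).

Definition fin_gen_mod : Prop :=
  exists gs : seq L, forall v : L,
    exists c : 'I_(size gs) -> R, v = \sum_(i < size gs) c i *: gs`_i.

Definition ann_mod (r : R) : Prop := forall v : L, r *: v = 0.

Definition prime_chain_over_ann (k : nat) (P : nat -> R -> Prop) : Prop :=
  (forall i, (i <= k)%N -> prime_ideal (P i) /\ (forall r, ann_mod r -> P i r)) /\
  (forall i, (i < k)%N -> pstrict_sub (P i) (P i.+1)).

(* dim L = d  (Krull dimension of R / Ann(L)); no d exists for L = 0 *)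
Definition mod_dim (d : nat) : Prop :=
  (exists P, prime_chain_over_ann d P) /\ ~ (exists P, prime_chain_over_ann d.+1 P).

Definition seq_mul_mod (xs : seq R) (v : L) : Prop :=
  exists ls : 'I_(size xs) -> L, v = \sum_(i < size xs) xs`_i *: ls i.

(* L / K has finite length : lengths of strict chains of submodules of L/K,
   i.e. of submodules of L containing K, are bounded *)
Definition quot_fin_length (K : L -> Prop) : Prop :=
  exists n : nat, forall (k : nat) (C : nat -> L -> Prop),
    (forall i, (i <= k)%N -> is_submod (C i) /\ (forall v, K v -> C i v)) ->
    (forall i, (i < k)%N -> pstrict_sub (C i) (C i.+1)) ->
    (k <= n)%N.

Definition is_sop (m : R -> Prop) (xs : seq R) : Prop :=
  mod_dim (size xs) /\ (forall i, (i < size xs)%N -> m xs`_i) /\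
  quot_fin_length (seq_mul_mod xs).

(* b(L) : r lies in b(L) iff for every s.o.p. x_1..x_d and every i,
   r annihilates ((x_1..x_{i-1})L :_L x_i) / (x_1..x_{i-1})L *)
Definition b_ideal (m : R -> Prop) (r : R) : Prop :=
  forall xs : seq R, is_sop m xs ->
    forall i, (i < size xs)%N ->
      forall v : L, seq_mul_mod (take i xs) (xs`_i *: v) ->
        seq_mul_mod (take i xs) (r *: v).

(* H^0_m(L) = elements killed by some power m^n of m *)
Definition H0m (m : R -> Prop) (v : L) : Prop :=
  exists n : nat, forall s : seq R, size s = n ->
    (forall i, (i < n)%N -> m s`_i) -> (\prod_(a <- s) a) *: v = 0.

End CommAlg.

(* Main.v *)
From Stdlib Require Import Classical ClassicalEpsilon.
Require Import Defs.
From HB Require Import structures.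
From mathcomp Require Import all_boot all_order all_algebra.
From mathcomp Require Import zify.
Import GRing.Theory.
Local Open Scope ring_scope.

Definition psub {T} (A B : T -> Prop) := forall x, A x -> B x.
Definition peq {T} (A B : T -> Prop) := psub A B /\ psub B A.
Definition addp {R : comNzRingType} {L : lmodType R} (A B : L -> Prop) : L -> Prop :=
  fun z => exists a b, A a /\ B b /\ z = a + b.
Definition Rl {R : comNzRingType} {L : lmodType R} (z : L) : L -> Prop :=
  fun v => exists a : R, v = a *: z.
Fixpoint spn {R : comNzRingType} {L : lmodType R} (zs : seq L) : L -> Prop :=
  match zs with
  | [::] => fun v => v = 0
  | z :: zs' => fun v => exists a u, spn zs' u /\ v = a *: z + u
  end.
Definition topp {T} : T -> Prop := fun _ => True.

Section Basic.
Context {R : comNzRingType} {L : lmodType R}.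
Implicit Types A B C K : L -> Prop.

Lemma sm0 {A} : is_submod A -> A 0.  Proof. by case. Qed.
Lemma smD {A u v} : is_submod A -> A u -> A v -> A (u + v).
Proof. by move=> [_ [H _]]; apply: H. Qed.
Lemma smZ {A r v} : is_submod A -> A v -> A (r *: v).
Proof. by move=> [_ [_ H]]; apply: H. Qed.
Lemma smN {A v} : is_submod A -> A v -> A (- v).
Proof. by move=> H Hv; rewrite -scaleN1r; apply: smZ. Qed.
Lemma smB {A u v} : is_submod A -> A u -> A v -> A (u - v).
Proof. by move=> H Hu Hv; apply: smD => //; apply: smN. Qed.
Lemma sm_sum A (I : finType) (F : I -> L) : is_submod A -> (forall i, A (F i)) -> A (\sum_i F i).
Proof.
move=> H HF; apply: (big_ind A) => //; first exact: sm0.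
by move=> x y; apply: smD.
Qed.

Lemma sm_top : @is_submod R L topp. Proof. by []. Qed.
Lemma sm_add {A B} : is_submod A -> is_submod B -> is_submod (addp A B).
Proof.
move=> HA HB; split; first by exists 0, 0; rewrite addr0; split; [exact: sm0|split; [exact: sm0|]].
split.
- move=> u v [a [b [Ha [Hb ->]]]] [a' [b' [Ha' [Hb' ->]]]].
  exists (a + a'), (b + b'); split; first exact: smD.
  split; first exact: smD.
  by rewrite addrACA.
- move=> r v [a [b [Ha [Hb ->]]]]; exists (r *: a), (r *: b).
  by split; [exact: smZ|split; [exact: smZ| rewrite scalerDr]].
Qed.
Lemma sm_cap {A B} : is_submod A -> is_submod B -> is_submod (fun v => A v /\ B v).
Proof.
move=> HA HB; split; first by split; exact: sm0.
split; first by move=> u v [] ?? [] ??; split; apply: smD.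
by move=> r v [] ??; split; apply: smZ.
Qed.
Lemma sm_Rl (z : L) : is_submod (Rl z).
Proof.
split; first by exists 0; rewrite scale0r.
split; first by move=> u v [a ->] [b ->]; exists (a + b); rewrite scalerDl.
by move=> r v [a ->]; exists (r * a); rewrite scalerA.
Qed.
Lemma sm_spn (zs : seq L) : is_submod (spn zs).
Proof.
elim: zs => [|z zs IH] /=.
  split => //; split; first by move=> u v -> ->; rewrite addr0.
  by move=> r v ->; rewrite scaler0.
split; first by exists 0, 0; split; [exact: sm0|rewrite scale0r addr0].
split.
- move=> u v [a [u1 [H1 ->]]] [b [v1 [H2 ->]]].
  exists (a + b), (u1 + v1); split; first exact: smD.
  by rewrite scalerDl addrACA.
- move=> r v [a [u1 [H1 ->]]]; exists (r * a), (r *: u1); split; first exact: smZ.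
  by rewrite scalerDr scalerA.
Qed.

Lemma spn_sub {A} {zs : seq L} : is_submod A -> List.Forall A zs -> psub (spn zs) A.
Proof.
move=> HA; elim: zs => [|z zs IH] Hf v /=; first by move=> ->; exact: sm0.
move=> -[a [u [Hu ->]]].
inversion Hf as [|? ? Hz Hzs].
by apply: (smD HA); [exact: (smZ HA) | exact: IH].
Qed.

Lemma spn_map_sum {T : Type} (g : T -> L) (x0 : T) (ys : seq T) (c : 'I_(size ys) -> R) :
  spn (map g ys) (\sum_(i < size ys) c i *: g (nth x0 ys i)).
Proof.
elim: ys c => [|y ys IH] c /=; first by rewrite big_ord0.
rewrite big_ord_recl /=; exists (c ord0), (\sum_(i < size ys) c (lift ord0 i) *: g (nth x0 ys i)).
by split; first exact: (IH (fun i => c (lift ord0 i))).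
Qed.

Lemma spn_cat (zs1 zs2 : seq L) u v : spn zs1 u -> spn zs2 v -> spn (zs1 ++ zs2) (u + v).
Proof.
elim: zs1 u => [|z zs IH] u /=; first by move=> -> H; rewrite add0r.
move=> [a [u1 [H1 ->]]] H2; exists a, (u1 + v); split; first exact: IH.
by rewrite addrA.
Qed.

End Basic.


Definition sb (P : Prop) : nat := if excluded_middle_informative P then 1%N else 0%N.
Lemma sbT P : P -> sb P = 1%N.
Proof. by rewrite /sb; case: excluded_middle_informative. Qed.
Lemma sbF P : ~ P -> sb P = 0%N.
Proof. by rewrite /sb; case: excluded_middle_informative. Qed.

Arguments sbT {P}. Arguments sbF {P}.
Section Chains.
Context {R : comNzRingType} {L : lmodType R}.
Implicit Types A B C K : L -> Prop.
Implicit Types n k : nat.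

Definition flen A B (n : nat) := forall (k : nat) (C : nat -> L -> Prop),
  (forall i, (i <= k)%N -> is_submod (C i) /\ psub A (C i) /\ psub (C i) B) ->
  (forall i, (i < k)%N -> pstrict_sub (C i) (C i.+1)) -> (k <= n)%N.

Fixpoint cnt (X : nat -> L -> Prop) (k : nat) : nat :=
  match k with 0 => 0%N | k'.+1 => (cnt X k' + sb (pstrict_sub (X k') (X k'.+1)))%N end.

Lemma flen_eqp A A' B B' n : peq A A' -> peq B B' -> flen A B n -> flen A' B' n.
Proof.
move=> [HA _] [_ HB] H k C HC HS; apply: (H k C) => // i Hi.
have [h1 [h2 h3]] := HC i Hi; split=> //; split=> x hx; first by apply: h2; apply: (HA x hx).
by apply: (HB x); apply: h3.
Qed.

Lemma flen_refl A : flen A A 0.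
Proof.
move=> [|k] C HC HS //; have [_ [x [h1 h2]]] := HS 0%N isT.
have [_ [_ h3]] := HC 1%N isT; have [_ [h4 _]] := HC 0%N isT.
by case: h2; apply: h4; apply: (h3 x).
Qed.

Lemma ex_chain A B k (X : nat -> L -> Prop) :
  (forall i, (i <= k)%N -> is_submod (X i) /\ psub A (X i) /\ psub (X i) B) ->
  (forall i, (i < k)%N -> psub (X i) (X i.+1)) ->
  exists Y : nat -> L -> Prop,
    (forall i, (i <= cnt X k)%N -> is_submod (Y i) /\ psub A (Y i) /\ psub (Y i) B) /\
    (forall i, (i < cnt X k)%N -> pstrict_sub (Y i) (Y i.+1)) /\ peq (Y (cnt X k)) (X k).
Proof.
elim: k => [|k IH] HX HM.
    exists X; split.
    move=> i; rewrite leqn0 => /eqP ->; exact: HX.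
  by split=> //; split=> x.
have [Y [HY1 [HY2 HY3]]] : exists Y : nat -> L -> Prop,
    (forall i, (i <= cnt X k)%N -> is_submod (Y i) /\ psub A (Y i) /\ psub (Y i) B) /\
    (forall i, (i < cnt X k)%N -> pstrict_sub (Y i) (Y i.+1)) /\ peq (Y (cnt X k)) (X k).
  apply: IH => i Hi; [apply: HX; exact: leqW | apply: HM; exact: ltnW].
rewrite /=; set c := cnt X k in HY1 HY2 HY3 *.
case: (classic (pstrict_sub (X k) (X k.+1))) => Hs.
  rewrite sbT // addn1.
  exists (fun j => if (j <= c)%N then Y j else X k.+1); split.
    move=> i Hi; case: ifP => Hic; first exact: HY1.
    by apply: HX.
  split; last by rewrite ltnn; split=> x.
  move=> i; rewrite ltnS => Hi.
  have [Hlt|Heq] : (i < c)%N \/ i = c by lia.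
    by rewrite (ltnW Hlt) Hlt; apply: HY2.
  subst i; rewrite leqnn ltnn; case: Hs => Hs1 [x [hx1 hx2]]; split.
    by move=> y hy; apply: Hs1; apply: (proj1 HY3 y hy).
  by exists x; split=> // hy; apply: hx2; apply: (proj1 HY3 x hy).
rewrite sbF // addn0; exists Y; split=> //; split=> //.
have Hsub := HM k (ltnSn k).
split=> x hx; first by apply: Hsub; apply: (proj1 HY3 x).
apply: (proj2 HY3); apply: NNPP => hn; apply: Hs; split=> //.
by exists x.
Qed.

Lemma flen_cnt A B n k (X : nat -> L -> Prop) : flen A B n ->
  (forall i, (i <= k)%N -> is_submod (X i) /\ psub A (X i) /\ psub (X i) B) ->
  (forall i, (i < k)%N -> psub (X i) (X i.+1)) -> (cnt X k <= n)%N.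
Proof.
move=> H HX HM; have [Y [h1 [h2 _]]] := ex_chain A B k X HX HM.
exact: (H _ Y).
Qed.

Arguments flen_cnt {A B n k X}.
Lemma cnt_two (E F : nat -> L -> Prop) k :
  (forall i, (i < k)%N -> pstrict_sub (E i) (E i.+1) \/ pstrict_sub (F i) (F i.+1)) ->
  (k <= cnt E k + cnt F k)%N.
Proof.
elim: k => [|k IH] H //=.
have h := IH (fun i hi => H i (ltnW hi)).
case: (H k (ltnSn k)) => hs.
  rewrite (sbT hs); lia.
rewrite (sbT hs); lia.
Qed.

Lemma flen_ext A B C n1 n2 : is_submod B -> is_submod C -> psub A B -> psub B C ->
  flen A B n1 -> flen B C n2 -> flen A C (n1 + n2).
Proof.
move=> SB SC AB BC H1 H2 k D HD HS.
set E := fun i v => D i v /\ B v.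
set F := fun i => addp (D i) B.
have HDm : forall i, (i < k)%N -> psub (D i) (D i.+1) by move=> i hi; case: (HS i hi).
have cE : (cnt E k <= n1)%N.
  apply: (flen_cnt H1).
    move=> i hi; have [s [a c]] := HD i hi; split; first exact: sm_cap.
    by split=> x; [move=> hx; split; [apply: a| apply: AB] | case].
  by move=> i hi x [hx hb]; split => //; apply: HDm.
have cF : (cnt F k <= n2)%N.
  apply: (flen_cnt H2).
    move=> i hi; have [s [a c]] := HD i hi; split; first exact: sm_add.
    split=> x; first by move=> hx; exists 0, x; split; [exact: sm0|split=> //; rewrite add0r].
    move=> [u [b [hu [hb ->]]]]; exact: (smD SC (c u hu) (BC b hb)).
  move=> i hi x [u [b [hu [hb ->]]]]; exists u, b; split=> //; exact: HDm.
suff: (k <= cnt E k + cnt F k)%N by lia.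
apply: cnt_two => i hi; apply: NNPP => hn.
have [hsub [z [hz1 hz2]]] := HS i hi.
have [SDi _] := HD i (ltnW hi); have [SDi1 _] := HD i.+1 hi.
have eF : psub (F i.+1) (F i).
  move=> x hx; apply: NNPP => hx'; apply: hn; right; split.
    by move=> y [u [b [hu [hb ->]]]]; exists u, b; split=> //; exact: hsub.
  by exists x.
have eE : psub (E i.+1) (E i).
  move=> x hx; apply: NNPP => hx'; apply: hn; left; split.
    by move=> y [hy hb]; split=> //; exact: hsub.
  by exists x.
have : F i.+1 z by exists z, 0; split=> //; split; [exact: sm0| rewrite addr0].
move=> /eF [d [b [hd [hb ez]]]].
have hbD : D i.+1 b.
  have -> : b = z - d by rewrite ez addrC addKr.
  by apply: (smB SDi1) => //; exact: hsub.
have [hbi _] := eE b (conj hbD hb).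
by apply: hz2; rewrite ez; apply: (smD SDi).
Qed.

End Chains.


Section Maps.
Context {R : comNzRingType} {L L' : lmodType R}.

Definition gadd (g : L -> L') := forall u v, g (u + v) = g u + g v.
Definition gscl (g : L -> L') := forall (a : R) u, g (a *: u) = a *: g u.

Lemma g0 g : gscl g -> g 0 = 0.
Proof. by move=> h; rewrite -(scale0r 0) h scale0r. Qed.
Lemma gB g : gadd g -> gscl g -> forall u v, g (u - v) = g u - g v.
Proof. by move=> ha hs u v; rewrite ha -scaleN1r hs scaleN1r. Qed.

Lemma flen_pre (g : L -> L') (K : L -> Prop) (K2 : L' -> Prop) (n : nat) :
  gadd g -> gscl g -> is_submod K2 -> (forall u, K u -> K2 (g u)) -> flen K topp n ->
  flen K2 (fun z => exists u k2, K2 k2 /\ z = g u + k2) n.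
Proof.
move=> ha hs S2 hK H k D HD HS.
apply: (H k (fun i u => D i (g u))).
  move=> i hi; have [s [a b]] := HD i hi; split; last split=> // u hu.
    split; first by rewrite g0 //; exact: sm0.
    split; first by move=> u v hu hv; rewrite ha; exact: smD.
    by move=> r v hv; rewrite hs; exact: smZ.
  by apply: a; apply: hK.
move=> i hi; have [hsub [z [hz1 hz2]]] := HS i hi; split; first by move=> u; apply: hsub.
have [s1 [a1 b1]] := HD i.+1 hi; have [s0 [a0 b0]] := HD i (ltnW hi).
have [u [k2 [hk2 ez]]] := b1 z hz1.
exists u; split.
  have -> : g u = z - k2 by rewrite ez addrK.
  by apply: (smB s1) => //; apply: a1.
by move=> hu; apply: hz2; rewrite ez; apply: (smD s0) => //; apply: a0.
Qed.

Lemma flen_img (g : L -> L') (K1 : L -> Prop) (K2 : L' -> Prop) (n : nat) :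
  gadd g -> gscl g -> (forall u, g u = 0 -> K1 u) ->
  (forall w, K2 w -> exists u, K1 u /\ g u = w) -> flen K2 topp n -> flen K1 topp n.
Proof.
move=> ha hs hker hK H k D HD HS.
apply: (H k (fun i w => exists u, D i u /\ w = g u)).
  move=> i hi; have [s [a b]] := HD i hi; split; last split=> // w hw.
    split; first by exists 0; rewrite g0 //; split=> //; exact: sm0.
    split; first by move=> u v [u1 [h1 ->]] [v1 [h2 ->]]; exists (u1 + v1); rewrite ha; split=> //; exact: smD.
    by move=> r v [u1 [h1 ->]]; exists (r *: u1); rewrite hs; split=> //; exact: smZ.
  by have [u [hu <-]] := hK w hw; exists u; split=> //; apply: a.
move=> i hi; have [hsub [z [hz1 hz2]]] := HS i hi; split.
  by move=> w [u [hu ->]]; exists u; split=> //; apply: hsub.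
have [s0 [a0 b0]] := HD i (ltnW hi).
exists (g z); split; first by exists z.
move=> [d [hd ed]]; apply: hz2.
have hzd : K1 (z - d) by apply: hker; rewrite gB // ed subrr.
have -> : z = (z - d) + d by rewrite subrK.
by apply: (smD s0) => //; apply: a0.
Qed.

End Maps.

Section Simple.
Context {R : comNzRingType} {L : lmodType R}.

Lemma flen_simple (m : R -> Prop) (B : L -> Prop) (n : L) : local_with_max m -> is_submod B ->
  (forall a, m a -> B (a *: n)) -> flen B (addp B (Rl n)) 1.
Proof.
move=> [_ [_ hu]] SB hm [|[|k]] D HD HS //.
have [_ [z [hz1 hz2]]] := HS 0%N isT.
have [_ [y [hy1 hy2]]] := HS 1%N isT.
have [s0 [a0 b0]] := HD 0%N isT; have [s1 [a1 b1]] := HD 1%N isT.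
have [s2 [a2 b2]] := HD 2%N isT.
exfalso; apply: hy2.
have [b [w [hb [[a ->] ez]]]] := b1 z hz1.
case: (classic (m a)) => ha.
  by case: hz2; rewrite ez; apply: (smD s0); apply: a0 => //; apply: hm.
have [c hc] := hu a ha.
have hn : D 1%N n.
  have -> : n = c *: (z - b) by rewrite ez addrC addKr scalerA mulrC hc scale1r.
  by apply: (smZ s1); apply: (smB s1) => //; apply: a1.
have [b' [w' [hb' [[a' ->] ->]]]] := b2 y hy1.
by apply: (smD s1); [apply: a1 | apply: (smZ s1)].
Qed.

End Simple.


Lemma Forall_nth_seq {T} (x0 : T) (P : T -> Prop) (s : seq T) :
  (forall i, (i < size s)%N -> P (nth x0 s i)) -> List.Forall P s.
Proof.
elim: s => [|x s IH] H; constructor; first exact: (H 0%N).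
by apply: IH => i hi; apply: (H i.+1).
Qed.
Lemma Forall_nth_get {T} (x0 : T) (P : T -> Prop) (s : seq T) i :
  List.Forall P s -> (i < size s)%N -> P (nth x0 s i).
Proof.
elim: s i => [|x s IH] [|i] h //= hi; inversion h => //; exact: IH.
Qed.
Lemma Forall_map_seq {T U} (P : U -> Prop) (Q : T -> Prop) (g : T -> U) (ys : seq T) :
  (forall y, Q y -> P (g y)) -> List.Forall Q ys -> List.Forall P (map g ys).
Proof.
move=> H; elim: ys => [|y ys IH] hf /=; constructor; inversion hf; [exact: H | exact: IH].
Qed.
Lemma Forall_cat_seq {T} (P : T -> Prop) (s1 s2 : seq T) :
  List.Forall P s1 -> List.Forall P s2 -> List.Forall P (s1 ++ s2).
Proof.
elim: s1 => [|x s IH] h1 h2 //=; inversion h1; constructor => //; exact: IH.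
Qed.
Lemma Forall_impl_seq {T} (P Q : T -> Prop) (s : seq T) :
  (forall x, P x -> Q x) -> List.Forall P s -> List.Forall Q s.
Proof. by move=> H; elim: s => [|x s IH] h //=; inversion h; constructor; [exact: H|exact: IH]. Qed.

Lemma choice_fun {A B : Type} (b0 : B) (P : A -> B -> Prop) :
  exists w : A -> B, forall a, (exists b, P a b) -> P a (w a).
Proof.
exists (fun a => match excluded_middle_informative (exists b, P a b) with
  | left h => proj1_sig (constructive_indefinite_description _ h) | right _ => b0 end).
move=> a h; case: excluded_middle_informative => // h'.
exact: proj2_sig (constructive_indefinite_description _ h').
Qed.

Lemma delta_sum {R : comNzRingType} (ys : seq R) (j : 'I_(size ys)) :
  ys`_j = \sum_(i < size ys) (if i == j then 1 else 0) * ys`_i.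
Proof.
rewrite (bigD1 j) //= eqxx mul1r big1 ?addr0 // => i /negbTE ->; by rewrite mul0r.
Qed.

Lemma noeth_gen {R : comNzRingType} (I : R -> Prop) : noetherian_ring R -> is_ideal I ->
  exists ys : seq R, List.Forall I ys /\
    forall x, I x -> exists c : 'I_(size ys) -> R, x = \sum_(i < size ys) c i * ys`_i.
Proof.
move=> hN hI; have [ys hys] := hN I hI; exists ys; split; last by move=> x /hys.
apply: (Forall_nth_seq 0) => j hj.
apply/hys; exists (fun i => if i == Ordinal hj then 1 else 0).
exact: (delta_sum ys (Ordinal hj)).
Qed.

Section NM.
Context {R : comNzRingType} {L : lmodType R}.

Lemma noeth_mod : noetherian_ring R -> forall (gs : seq L) (S : L -> Prop),
  is_submod S -> psub S (spn gs) -> exists ns : seq L, List.Forall S ns /\ psub S (spn ns).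
Proof.
move=> hN; elim=> [|g gs IH] S SS hsub.
  by exists [::]; split.
pose I := fun a : R => exists s, S s /\ spn gs (s - a *: g).
have hI : is_ideal I.
  rewrite /I; split; first by exists 0; split; [exact: (sm0 SS) | rewrite scale0r subr0; exact: (sm0 (sm_spn gs))].
  split.
    move=> a1 a2 [s1 [h1 h1']] [s2 [h2 h2']]; exists (s1 + s2); split; first exact: (smD SS).
    have -> : s1 + s2 - (a1 + a2) *: g = (s1 - a1 *: g) + (s2 - a2 *: g).
      by rewrite scalerDl opprD addrACA.
    exact: (smD (sm_spn gs)).
  move=> r a [s1 [h1 h1']]; exists (r *: s1); split; first exact: (smZ SS).
  by rewrite -scalerA -scalerBr; exact: (smZ (sm_spn gs)).
have [ys [hysI hys]] := noeth_gen I hN hI.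
have [w hw] := choice_fun 0 (fun a s => S s /\ spn gs (s - a *: g)).
pose S' := fun v => S v /\ spn gs v.
have [ns' [hns' hS']] := IH S' (sm_cap SS (sm_spn gs)) (fun v h => proj2 h).
have hwS : List.Forall S (map w ys).
  by apply: (Forall_map_seq S I) => // y hy; exact: (proj1 (hw y hy)).
exists (map w ys ++ ns'); split.
  by apply: Forall_cat_seq => //; apply: (Forall_impl_seq S') => // x [].
move=> v hv; have [a [u [hu ev]]] := hsub v hv.
have hIa : I a by exists v; split=> //; rewrite ev [a *: g + u]addrC addrK.
have [c ea] := hys a hIa.
pose t := \sum_(i < size ys) c i *: w (ys`_i).
have ht : spn (map w ys) t by exact: spn_map_sum.
have htS : S t by exact: (spn_sub SS hwS).
have htg : spn gs (t - a *: g).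
  rewrite ea scaler_suml -sumrB; apply: sm_sum; first exact: sm_spn.
  move=> i; rewrite -scalerA -scalerBr; apply: (smZ (sm_spn gs)).
  apply: (proj2 (hw _ _)); exact: (Forall_nth_get 0 I ys i hysI).
have hvt : S' (v - t).
  split; first exact: (smB SS).
  have -> : v - t = (v - a *: g) - (t - a *: g) by rewrite opprB addrA subrK.
  apply: (smB (sm_spn gs)) => //; by rewrite ev [a *: g + u]addrC addrK.
have -> : v = t + (v - t) by rewrite addrC subrK.
by apply: spn_cat => //; apply: hS'.
Qed.

End NM.


Section Len.
Context {R : comNzRingType} {L : lmodType R}.

Definition fl_ok (z : L) := forall K : L -> Prop, is_submod K -> exists b, flen K (addp K (Rl z)) b.

Lemma flen_spn (zs : seq L) : List.Forall fl_ok zs ->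
  forall K : L -> Prop, is_submod K -> exists b, flen K (addp K (spn zs)) b.
Proof.
elim: zs => [|z zs IH] hf K SK.
  exists 0%N; apply: (flen_eqp K _ K _ _) => //; last exact: flen_refl.
    by split.
  split=> x; first by move=> hx; exists x, 0; rewrite addr0.
  by move=> [a [b [ha [/= -> ->]]]]; rewrite addr0.
have [hz hzs] : fl_ok z /\ List.Forall fl_ok zs by inversion hf.
have [b1 H1] := IH hzs K SK.
have SB : is_submod (addp K (spn zs)) by apply: sm_add => //; exact: sm_spn.
have [b2 H2] := hz _ SB.
exists (b1 + b2)%N.
apply: (flen_eqp K _ (addp (addp K (spn zs)) (Rl z)) _ _) => //.
- by split.
- split=> x.
    move=> [y [w [[k [s [hk [hs ->]]]] [[a ->] ->]]]].
    exists k, (a *: z + s); split=> //; split; last by rewrite addrAC addrA.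
    by exists a, s.
  move=> [k [y [hk [[a [s [hs ->]]] ->]]]].
  exists (k + s), (a *: z); split; first by exists k, s.
  by split; [exists a | rewrite addrCA addrC].
apply: flen_ext H1 H2 => //.
- by apply: sm_add => //; exact: sm_Rl.
- by move=> x hx; exists x, 0; rewrite addr0; split=> //; split=> //; exact: sm0 (sm_spn zs).
- by move=> x hx; exists x, 0; rewrite addr0; split=> //; split=> //; exists 0; rewrite scale0r.
Qed.

Definition killed (m : R -> Prop) (e : nat) (n : L) :=
  forall s : seq R, size s = e -> (forall i, (i < e)%N -> m s`_i) -> (\prod_(a <- s) a) *: n = 0.

Lemma spn_map_Rl (n : L) (ys : seq R) v : spn (map (fun y => y *: n) ys) v -> exists a, v = a *: n.
Proof.
elim: ys v => [|y ys IH] v /=; first by move=> ->; exists 0; rewrite scale0r.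
move=> [a [u [hu ->]]]; have [b ->] := IH u hu.
by exists (a * y + b); rewrite scalerDl scalerA.
Qed.

Lemma killed_fl (m : R -> Prop) : noetherian_ring R -> local_with_max m ->
  forall e (n : L), killed m e n -> fl_ok n.
Proof.
move=> hN hL; have hm : is_ideal m by case: hL.
have [ys [hysm hys]] := noeth_gen m hN hm.
elim=> [|e IH] n hk.
  have n0 : n = 0.
    by have := hk [::] erefl (fun i (hi : (i < 0)%N) => False_ind _ (notF hi)); rewrite big_nil scale1r.
  move=> K SK; exists 0%N; apply: (flen_eqp K _ K _ _) => //; last exact: flen_refl.
    by split.
  split=> x; first by move=> hx; exists x, 0; rewrite addr0; split=> //; split=> //; exists 0; rewrite n0 scale0r.
  by move=> [a [b [ha [[c ->] ->]]]]; rewrite n0 scaler0 addr0.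
move=> K SK.
set zs := map (fun y => y *: n) ys.
have hzs : List.Forall fl_ok zs.
  apply: (Forall_map_seq fl_ok m) => // y hy; apply: (IH (y *: n)) => s hs hsm.
  rewrite scalerA mulrC.
  have -> : y * \prod_(a <- s) a = \prod_(a <- y :: s) a by rewrite big_cons.
  apply: hk => /=; first by rewrite hs.
  by case=> [|i] hi //=; apply: hsm.
have [b1 H1] := flen_spn zs hzs K SK.
have SB : is_submod (addp K (spn zs)) by apply: sm_add => //; exact: sm_spn.
have H2 := flen_simple m _ n hL SB.
exists (b1 + 1)%N.
apply: (flen_eqp K _ (addp (addp K (spn zs)) (Rl n)) _ _) => //.
- by split.
- split=> [x|x].
    move=> [y [w [[k [s [hk' [hs ->]]]] [[a ->] ->]]]].
    have [b ->] := spn_map_Rl n ys s hs.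
    by exists k, ((b + a) *: n); split=> //; split; [exists (b + a)| rewrite scalerDl addrA].
  move=> [k [y [hk' [hy ->]]]].
  by exists (k + 0), y; split; [exists k, 0; split=> //; split=> //; exact: sm0 (sm_spn zs)| rewrite addr0].
apply: flen_ext H1 _ => //.
- by apply: sm_add => //; exact: sm_Rl.
- by move=> x hx; exists x, 0; rewrite addr0; split=> //; split=> //; exact: sm0 (sm_spn zs).
- by move=> x hx; exists x, 0; rewrite addr0; split=> //; split=> //; exists 0; rewrite scale0r.
apply: H2 => a ha; have [c ->] := hys a ha.
exists 0, (\sum_(i < size ys) c i *: (ys`_i *: n)); split; first exact: sm0.
split; first exact: (spn_map_sum (fun y => y *: n) 0 ys c).
by rewrite add0r scaler_suml; apply: eq_bigr => i _; rewrite scalerA.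
Qed.

End Len.


Fixpoint Kr {R : comNzRingType} {L : lmodType R} (xs : seq R) : L -> Prop :=
  match xs with
  | [::] => fun v => v = 0
  | x :: xs' => fun v => exists u k, Kr xs' k /\ v = x *: u + k
  end.

Section KrS.
Context {R : comNzRingType} {L : lmodType R}.

Lemma sm_Kr (xs : seq R) : is_submod (@Kr R L xs).
Proof.
elim: xs => [|x xs IH] /=.
  split => //; split; first by move=> u v -> ->; rewrite addr0.
  by move=> r v ->; rewrite scaler0.
split; first by exists 0, 0; split; [exact: (sm0 IH)|rewrite scaler0 addr0].
split.
- move=> u v [a [u1 [H1 ->]]] [b [v1 [H2 ->]]].
  exists (a + b), (u1 + v1); split; first exact: (smD IH).
  by rewrite scalerDr addrACA.
- move=> r v [a [u1 [H1 ->]]]; exists (r *: a), (r *: u1); split; first exact: (smZ IH).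
  by rewrite scalerDr !scalerA mulrC.
Qed.

Lemma Kr_smm (xs : seq R) (v : L) : seq_mul_mod xs v <-> Kr xs v.
Proof.
elim: xs v => [|x xs IH] v.
  by split; [move=> [ls ->]; rewrite big_ord0 | move=> /= ->; exists (fun _ => 0); rewrite big_ord0].
split.
  move=> [ls ->]; rewrite big_ord_recl /=.
  exists (ls ord0), (\sum_(i < size xs) xs`_i *: ls (lift ord0 i)); split=> //.
  by apply/IH; exists (fun i => ls (lift ord0 i)).
move=> [u [k [hk ->]]]; have [ls ->] := (IH k).2 hk.
exists (fun i : 'I_(size xs).+1 => if unlift ord0 i is Some j then ls j else u).
rewrite big_ord_recl /= unlift_none; congr (_ + _).
by apply: eq_bigr => i _; rewrite liftK.
Qed.

Lemma Kr_cat (a b : seq R) (v : L) :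
  Kr (a ++ b) v <-> exists v1 v2, Kr a v1 /\ Kr b v2 /\ v = v1 + v2.
Proof.
elim: a v => [|x a IH] v /=.
  split; first by move=> h; exists 0, v; rewrite add0r.
  by move=> [v1 [v2 [-> [h ->]]]]; rewrite add0r.
split.
  move=> [u [k [hk ->]]]; have [v1 [v2 [h1 [h2 ->]]]] := (IH k).1 hk.
  by exists (x *: u + v1), v2; split; [exists u, v1|split=> //; rewrite addrA].
move=> [v1 [v2 [[u [k [hk ->]]] [h2 ->]]]].
exists u, (k + v2); split; last by rewrite addrA.
by apply/IH; exists k, v2.
Qed.

Lemma Kr_mid (pre post : seq R) (y : R) (u : L) : Kr (pre ++ y :: post) (y *: u).
Proof.
apply/Kr_cat; exists 0, (y *: u); split; first exact: (sm0 (sm_Kr pre)).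
by split; [exists u, 0; split; [exact: (sm0 (sm_Kr post)) | rewrite addr0] | rewrite add0r].
Qed.

End KrS.

Section KrMap.
Context {R : comNzRingType} {L L' : lmodType R}.

Lemma Kr_map (g : L -> L') (xs : seq R) (u : L) : gadd g -> gscl g -> Kr xs u -> Kr xs (g u).
Proof.
move=> ha hs; elim: xs u => [|x xs IH] u /=; first by move=> ->; rewrite g0.
by move=> [u1 [k [hk ->]]]; exists (g u1), (g k); rewrite ha hs; split=> //; exact: IH.
Qed.

Lemma Kr_lift (g : L -> L') (xs : seq R) (w : L') : gadd g -> gscl g ->
  (forall w, exists v, g v = w) -> Kr xs w -> exists u, Kr xs u /\ g u = w.
Proof.
move=> ha hs hsurj; elim: xs w => [|x xs IH] w /=.
  by move=> ->; exists 0; rewrite g0.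
move=> [u1 [k [hk ->]]]; have [v hv] := hsurj u1; have [k' [hk' hk'']] := IH k hk.
by exists (x *: v + k'); split; [exists v, k' | rewrite ha hs hv hk''].
Qed.

End KrMap.


Section Pow.
Context {R : comNzRingType} {L : lmodType R}.

Lemma iter_mul (y : R) e : iter e ( *%R y) 1 = y ^+ e.
Proof. by elim: e => [|e IH] //=; rewrite IH exprS. Qed.

Lemma killed_pow {m : R -> Prop} {e} {n : L} {y} : killed m e n -> m y -> y ^+ e *: n = 0.
Proof.
move=> hk hy; have := hk (nseq e y) (size_nseq e y).
rewrite big_nseq iter_mul; apply=> i hi; by rewrite nth_nseq hi.
Qed.

Lemma killed_pow_ge {m : R -> Prop} {e e'} {n : L} {y} : killed m e n -> m y -> (e <= e')%N -> y ^+ e' *: n = 0.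
Proof.
move=> hk hy he; rewrite -(subnK he) exprD -scalerA (killed_pow hk hy) scaler0 //.
Qed.

Lemma fg_spn : fin_gen_mod L -> exists gs : seq L, forall v, spn gs v.
Proof.
move=> [gs hgs]; exists gs => v; have [c ->] := hgs v.
have := spn_map_sum id 0 gs c; by rewrite map_id.
Qed.

Lemma prime_pow (P : R -> Prop) (x : R) e : prime_ideal P -> P (x ^+ e) -> P x.
Proof.
move=> [hI [h1 hp]]; elim: e => [|e IH]; first by rewrite expr0.
by rewrite exprS => /hp [].
Qed.

End Pow.

Section Dim.
Context {R : comNzRingType} {M Q : lmodType R}.

Lemma ann_sub (f : M -> Q) r : gscl f -> (forall w, exists v, f v = w) -> ann_mod M r -> ann_mod Q r.
Proof. by move=> hs hsurj ha w; have [v <-] := hsurj w; rewrite -hs ha g0. Qed.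

Lemma ann_prime (m : R -> Prop) (f : M -> Q) (P : R -> Prop) (x : R) :
  gadd f -> gscl f -> fin_gen_mod M -> (forall v, f v = 0 -> H0m m v) ->
  prime_ideal P -> (forall r, ann_mod M r -> P r) -> m x -> ~ P x ->
  forall a, ann_mod Q a -> P a.
Proof.
move=> ha hs hfg hH hP hAnn hx hnx a haQ.
have [gs hgs] := fg_spn hfg.
have hk : forall v : M, exists e, killed m e (a *: v).
  move=> v; have hf0 : f (a *: v) = 0 by rewrite hs haQ.
  by have [e he] := hH (a *: v) hf0; exists e.
have [E hE] : exists E, forall v, spn gs v -> x ^+ E *: (a *: v) = 0.
  elim: (gs) => [|g gs' [E' hE']].
    by exists 0%N => v /= ->; rewrite !scaler0.
  have [e he] := hk g.
  exists (e + E')%N => v /= [b [u [hu ->]]].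
  have h1 : x ^+ (e + E') *: (a *: g) = 0 := killed_pow_ge he hx (leq_addr E' e).
  have h2 : x ^+ (e + E') *: (a *: u) = 0 by rewrite exprD -scalerA hE' // scaler0.
  move: h1 h2; rewrite !scalerDr !scalerA => h1 h2.
  have -> : x ^+ (e + E') * a * b = b * (x ^+ (e + E') * a) by rewrite mulrC.
  by rewrite -scalerA h1 scaler0 add0r h2.
have : P (x ^+ E * a).
  by apply: hAnn => v; rewrite -scalerA hE.
case: hP => [hI [h1 hp]] /hp [] // hxE; case: hnx.
exact: (prime_pow P x E (conj hI (conj h1 hp)) hxE).
Qed.

End Dim.

Section Dim2.
Context {R : comNzRingType} {M Q : lmodType R}.

Lemma dim_transfer (m : R -> Prop) (f : M -> Q) d : local_with_max m ->
  gadd f -> gscl f -> fin_gen_mod M -> (forall v, f v = 0 -> H0m m v) ->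
  (forall w, exists v, f v = w) -> mod_dim Q d -> mod_dim M d.
Proof.
move=> hL ha hs hfg hH hsurj [[P [hch hst]] hno]; split.
  exists P; split=> // i hi; have [hp hA] := hch i hi; split=> // r hr.
  by apply: hA; exact: (ann_sub f r hs hsurj hr).
move=> [Pc [hch' hst']]; apply: hno; exists Pc; split=> //.
have key : forall i, (i < d.+1)%N -> forall a, ann_mod Q a -> Pc i a.
  move=> i hi a haQ.
  have [hsub [x [hx1 hx2]]] := hst' i hi.
  have [hpi hAi] := hch' i (ltnW hi); have [hpi1 _] := hch' i.+1 hi.
  have hmx : m x.
    apply: NNPP => hnm; have [y hy] := (proj2 (proj2 hL)) x hnm.
    case: hpi1 => [[_ [_ hI]] [h1 _]]; apply: h1; rewrite -hy mulrC; exact: hI.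
  exact: (ann_prime m f (Pc i) x ha hs hfg hH hpi hAi hmx hx2).
move=> i hi; have [hp hA] := hch' i hi; split=> // a haQ.
move: hi; rewrite leq_eqVlt => /orP [/eqP ei|hi]; last exact: key.
subst i; have [hsub _] := hst' d (ltnSn d); apply: hsub; exact: key.
Qed.

End Dim2.


Lemma qfl_flen {R : comNzRingType} {L : lmodType R} (K : L -> Prop) :
  quot_fin_length K <-> exists n, flen K topp n.
Proof.
split.
  move=> [n hn]; exists n => k C hC hS; apply: (hn k C) => // i hi.
  by have [a [b _]] := hC i hi.
move=> [n hn]; exists n => k C hC hS; apply: (hn k C) => // i hi.
by have [a b] := hC i hi.
Qed.

Lemma Kr_smm_peq {R : comNzRingType} {L : lmodType R} (xs : seq R) :
  peq (@seq_mul_mod R L xs) (Kr xs).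
Proof. by split=> v /Kr_smm. Qed.

Section Transfer.
Context {R : comNzRingType} {M Q : lmodType R}.

Lemma Kt_sub (pre post : seq R) (y : R) t (z : M) :
  Kr (pre ++ y ^+ t.+1 :: post) z -> Kr (pre ++ y ^+ t :: post) z.
Proof.
move=> /Kr_cat [v1 [v2 [h1 [[u [k [hk ->]]] ->]]]].
apply/Kr_cat; exists v1, (y ^+ t *: (y *: u) + k); split=> //; split.
  by exists (y *: u), k.
by rewrite scalerA -exprSr.
Qed.

Lemma fl_transfer (m : R -> Prop) (f : M -> Q) (N : M -> Prop) (pre post : seq R) (y : R) t :
  noetherian_ring R -> local_with_max m -> fin_gen_mod M -> is_submod N ->
  (forall v, N v -> H0m m v) -> gadd f -> gscl f -> (forall w, exists v, f v = w) ->
  (forall v, f v = 0 <-> N v) -> (0 < t)%N ->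
  quot_fin_length (@seq_mul_mod R Q (pre ++ y :: post)) ->
  quot_fin_length (@seq_mul_mod R M (pre ++ y ^+ t :: post)).
Proof.
move=> hN hL hfg SN hNH ha hs hsurj hker ht0 hq.
set xs := pre ++ y :: post.
have [nQ hnQ] : exists n, flen (@Kr R Q xs) topp n.
  have [n hn] := (qfl_flen _).1 hq; exists n.
  by apply: (flen_eqp _ _ _ _ _ (Kr_smm_peq xs) _ hn); split.
set K := @Kr R M xs.
have hA : exists n, flen K topp n.
  have h1 : flen (addp K N) topp nQ.
    apply: (flen_img f (addp K N) (Kr xs) nQ ha hs) => //.
      move=> u /hker hu; exists 0, u; split; first exact: (sm0 (sm_Kr xs)).
      by split=> //; rewrite add0r.
    move=> w hw; have [u [hu hfu]] := Kr_lift f xs w ha hs hsurj hw.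
    exists u; split=> //; exists u, 0; split=> //; split; [exact: (sm0 SN)| by rewrite addr0].
  have [gs hgs] := fg_spn hfg.
  have [ns [hnsN hNs]] := noeth_mod hN gs N SN (fun v _ => hgs v).
  have hok : List.Forall fl_ok ns.
    apply: (Forall_impl_seq N) => // v hv; have [e he] := hNH v hv.
    exact: (killed_fl m hN hL e v he).
  have [b hb] := flen_spn ns hok K (sm_Kr xs).
  have h2 : flen K (addp K N) b.
    apply: (flen_eqp _ _ _ _ _ _ _ hb); first by split.
    split=> z [a [c [ha' [hc ->]]]]; exists a, c; split=> //; split=> //.
      exact: (spn_sub SN hnsN).
    exact: hNs.
  exists (b + nQ)%N.
  have SB : is_submod (addp K N) by apply: sm_add => //; exact: sm_Kr.
  have AB : psub K (addp K N).
    by move=> z hz; exists z, 0; rewrite addr0; split=> //; split=> //; exact: (sm0 SN).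
  exact: (flen_ext K (addp K N) topp b nQ SB sm_top AB (fun _ _ => I) h2 h1).
have [nA hnA] := hA.
have main : forall s, (0 < s)%N -> exists n, flen (@Kr R M (pre ++ y ^+ s :: post)) topp n.
  elim=> [|s' IH] // _.
  case: s' IH => [|s'] IH; first by rewrite expr1; exists nA.
  have [n' hn'] := IH isT.
  set s := s'.+1 in hn' *.
  have hstep : flen (@Kr R M (pre ++ y ^+ s.+1 :: post)) (@Kr R M (pre ++ y ^+ s :: post)) nA.
    have hsc : gscl (fun u : M => y ^+ s *: u) by move=> a u; rewrite !scalerA mulrC.
    have had : gadd (fun u : M => y ^+ s *: u) by move=> u v; rewrite scalerDr.
    have hK : forall u, K u -> @Kr R M (pre ++ y ^+ s.+1 :: post) (y ^+ s *: u).
      move=> u /Kr_cat [v1 [v2 [h1 [[u' [k [hk ->]]] ->]]]].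
      apply/Kr_cat; exists (y ^+ s *: v1), (y ^+ s.+1 *: u' + y ^+ s *: k); split.
        exact: (smZ (sm_Kr pre)).
      split; first by exists u', (y ^+ s *: k); split=> //; exact: (smZ (sm_Kr post)).
      by rewrite !scalerDr scalerA -exprSr.
    have hp := flen_pre (fun u : M => y ^+ s *: u) K (@Kr R M (pre ++ y ^+ s.+1 :: post)) nA
      had hsc (sm_Kr _) hK hnA.
    apply: (flen_eqp _ _ _ _ _ _ _ hp); first by split.
      split=> z.
        move=> [u [k2 [hk2 ->]]]; apply: (smD (sm_Kr _)); first exact: Kr_mid.
        exact: Kt_sub.
      move=> /Kr_cat [v1 [v2 [h1 [[u [k [hk ->]]] ->]]]].
      exists u, (v1 + (y ^+ s.+1 *: 0 + k)); split.
        by apply/Kr_cat; exists v1, (y ^+ s.+1 *: 0 + k); split=> //; split=> //; exists 0, k.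
      by rewrite scaler0 add0r addrCA.
  exists (nA + n')%N; apply: (flen_ext _ _ topp nA n' (sm_Kr _) sm_top _ _ hstep hn') => //.
  exact: Kt_sub.
have [n hn] := main t ht0.
apply/qfl_flen; exists n; apply: (flen_eqp _ _ _ _ _ _ _ hn); last by split.
by split=> v /Kr_smm.
Qed.

End Transfer.


Lemma nth_mid {R : comNzRingType} (a b : seq R) (y z : R) (j : nat) :
  j != size a -> nth 0 (a ++ z :: b) j = nth 0 (a ++ y :: b) j.
Proof.
move=> hne; rewrite !nth_cat; case: ltnP => // hj.
move/eqP: hne => hne.
case E: (j - size a)%N => [|k] //.
by exfalso; apply: hne; apply/eqP; rewrite eqn_leq hj andbT -subn_eq0 E.
Qed.

Theorem lemma2p14 (R : comNzRingType) (m : R -> Prop) (M : lmodType R)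
    (N : M -> Prop) (Q : lmodType R) (f : {linear M -> Q}) :
  noetherian_ring R -> local_with_max m -> fin_gen_mod M ->
  is_submod N -> (forall v, N v -> H0m m v) ->
  (forall w : Q, exists v : M, f v = w) ->
  (forall v : M, f v = 0 <-> N v) ->
  forall r : R, b_ideal M m r -> b_ideal Q m r.
Proof.
move=> hN hL hfg SN hNH hsurj hker r hb xs hsop i hi w hw.
have ha : gadd f by move=> u v; rewrite linearD.
have hs : gscl f by move=> a u; rewrite linearZZ.
have hH : forall v, f v = 0 -> H0m m v by move=> v /hker; exact: hNH.
have [hdim [hxm hfl]] := hsop.
set y := xs`_i; set pre := take i xs; set post := drop i.+1 xs.
have exs : xs = pre ++ y :: post by rewrite /pre /post /y -drop_nth // cat_take_drop.
have hsp : size pre = i by rewrite /pre size_take hi.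
have hym : m y by apply: hxm.
have [v hv] := hsurj w.
have hw' : @Kr R Q pre (y *: w) by apply/Kr_smm.
have [u [hu hfu]] := Kr_lift f pre (y *: w) ha hs hsurj hw'.
have hn0 : N (y *: v - u) by apply/hker; rewrite gB // hs hv hfu subrr.
have [e he] := hNH _ hn0.
have hye := killed_pow he hym.
set xs' := pre ++ y ^+ e.+1 :: post.
have hsz : size xs' = size xs by rewrite exs /xs' !size_cat.
have hsop' : is_sop M m xs'.
  split; first by rewrite hsz; exact: (dim_transfer m f _ hL ha hs hfg hH hsurj hdim).
  split.
    move=> j hj; case: (eqVneq j (size pre)) => [->|hne].
      rewrite /xs' nth_cat ltnn subnn /=.
      case: hL => [[_ [_ hI]] _]; rewrite exprSr; exact: hI.
    rewrite /xs' (nth_mid _ _ y) // -exs; apply: hxm; by rewrite -hsz.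
  apply: (fl_transfer m f N pre post y e.+1 hN hL hfg SN hNH ha hs hsurj hker) => //.
  by rewrite -exs.
have hi' : (i < size xs')%N by rewrite hsz.
have htk : take i xs' = pre by rewrite /xs' take_size_cat.
have hnth : xs'`_i = y ^+ e.+1 by rewrite /xs' nth_cat -hsp ltnn subnn.
have := hb xs' hsop' i hi' v; rewrite htk hnth.
move=> h; have /Kr_smm hrv : seq_mul_mod pre (r *: v).
  apply: h; apply/Kr_smm.
  have -> : y ^+ e.+1 *: v = y ^+ e *: u.
    rewrite exprSr -scalerA.
    have -> : y *: v = u + (y *: v - u) by rewrite addrC subrK.
    by rewrite scalerDr hye addr0.
  exact: (smZ (sm_Kr pre)).
apply/Kr_smm; rewrite -hv -hs; exact: Kr_map.
Qed.
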